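(* Let $f : S\oplus V \to \mathbb{R}_{0,3}$ be a (left) holomorphic Cliffordian function on the whole space $S\oplus V\cong\mathbb{R}^4$, i.e. $D\Delta f = 0$ on $\mathbb{R}^4$. Assume that $f$ and all its partial derivatives (of all components) up to order two are bounded on $\mathbb{R}^4$. Then $f$ is constant.
   Context: $\mathbb{R}_{0,3}$ is the real Clifford algebra generated by $e_1,e_2,e_3$ with $e_ie_j+e_je_i=-2\delta_{ij}$; put $e_0=1$. $S\oplus V$ is the set of paravectors $x=x_0+x_1e_1+x_2e_2+x_3e_3$ ($x_i\in\mathbb{R}$), identified with $\mathbb{R}^4$. $D=\sum_{i=0}^3 e_i\,\partial/\partial x_i$ (acting on the left) and $\Delta=\sum_{i=0}^3\partial^2/\partial x_i^2$. A function $f$ from an open subset of $S\oplus V$ to $\mathbb{R}_{0,3}$ is (left) holomorphic Cliffordian if $D\Delta f=0$ there. *)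

(* Defs.v *)
From Stdlib Require Import Reals.
From Coquelicot Require Import Coquelicot.
Open Scope R_scope.

(* Coordinates x_0, x_1, x_2, x_3 of a paravector x = x0 + x1 e1 + x2 e2 + x3 e3. *)
Inductive idx4 := I0 | I1 | I2 | I3.
Definition idx4_eqb (i j : idx4) : bool :=
  match i, j with
  | I0, I0 | I1, I1 | I2, I2 | I3, I3 => true
  | _, _ => false
  end.

Definition pt := idx4 -> R.

(* R_{0,3}: basis blades e_A, A a subset of {1,2,3}, encoded as (a1,a2,a3). *)
Definition blade := (bool * bool * bool)%type.
Definition cl := blade -> R.

Definition sgn (b : bool) : R := if b then -1 else 1.

(* Left multiplication by the generator e_i (i = 1,2,3), computed from
   e_i e_j + e_j e_i = -2 delta_ij: for A = {a1<...<ak},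
   e_i e_A = (-1)^{#{a in A | a < i}} * (if i in A then -1 else 1) * e_{A xor {i}}. *)
Definition lmul_e1 (u : cl) : cl :=
  fun B => let '(b1, b2, b3) := B in sgn (negb b1) * u (negb b1, b2, b3).
Definition lmul_e2 (u : cl) : cl :=
  fun B => let '(b1, b2, b3) := B in sgn b1 * sgn (negb b2) * u (b1, negb b2, b3).
Definition lmul_e3 (u : cl) : cl :=
  fun B => let '(b1, b2, b3) := B in
    sgn b1 * sgn b2 * sgn (negb b3) * u (b1, b2, negb b3).

Definition upd (x : pt) (i : idx4) (t : R) : pt :=
  fun j => if idx4_eqb i j then t else x j.

Definition partial (i : idx4) (h : pt -> R) : pt -> R :=
  fun x => Derive (fun t => h (upd x i t)) (x i).

Definition partial_ex (i : idx4) (h : pt -> R) : Prop :=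
  forall x, ex_derive (fun t => h (upd x i t)) (x i).

Definition cont4 (h : pt -> R) : Prop :=
  forall x eps, 0 < eps -> exists delta, 0 < delta /\
    forall y, (forall i, Rabs (y i - x i) < delta) -> Rabs (h y - h x) < eps.

Fixpoint Ck (k : nat) (h : pt -> R) : Prop :=
  match k with
  | O => cont4 h
  | S k' => cont4 h /\ forall i, partial_ex i h /\ Ck k' (partial i h)
  end.

Definition cpartial (i : idx4) (g : pt -> cl) : pt -> cl :=
  fun x B => partial i (fun y => g y B) x.

Definition laplacian (g : pt -> cl) : pt -> cl :=
  fun x B => cpartial I0 (cpartial I0 g) x B + cpartial I1 (cpartial I1 g) x B
           + cpartial I2 (cpartial I2 g) x B + cpartial I3 (cpartial I3 g) x B.

Definition dirac (g : pt -> cl) : pt -> cl :=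
  fun x B => cpartial I0 g x B + lmul_e1 (cpartial I1 g x) B
           + lmul_e2 (cpartial I2 g x) B + lmul_e3 (cpartial I3 g x) B.

(* Left holomorphic Cliffordian on the whole space: f of class C^3
   (so that D Delta f is defined classically) and D Delta f = 0. *)
Definition holomorphic_cliffordian (f : pt -> cl) : Prop :=
  (forall B, Ck 3 (fun x => f x B)) /\
  (forall x B, dirac (laplacian f) x B = 0).

Definition bounded4 (h : pt -> R) : Prop :=
  exists M, forall x, Rabs (h x) <= M.

(* Main.v *)
Require Import Defs.
From Stdlib Require Import Reals FunctionalExtensionality Lra Classical.
From Coquelicot Require Import Coquelicot.
Open Scope R_scope.

Module BoxM.
From mathcomp Require Import all_boot all_order all_algebra.
From mathcomp Require Import all_classical all_reals all_analysis.
From mathcomp Require Import Rstruct Rstruct_topology.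
Import Order.TTheory GRing.Theory Num.Theory.
Import numFieldNormedType.Exports.
Open Scope R_scope.

Definition ofI (i : idx4) : 'I_4 :=
  match i with I0 => @Ordinal 4 0 isT | I1 => @Ordinal 4 1 isT
  | I2 => @Ordinal 4 2 isT | I3 => @Ordinal 4 3 isT end.
Definition toI (j : 'I_4) : idx4 :=
  match nat_of_ord j with 0%nat => I0 | 1%nat => I1 | 2%nat => I2 | _ => I3 end.
Lemma toI_ofI i : toI (ofI i) = i. Proof. by case: i. Qed.

Definition pt_of (r : 'rV[R]_4) : pt := fun i => r ord0 (ofI i).

Lemma box_min (v : pt -> R) (a b : pt) : (forall i, a i <= b i) -> cont4 v ->
  exists q, (forall i, a i <= q i <= b i) /\
    forall y, (forall i, a i <= y i <= b i) -> v q <= v y.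
Proof.
move=> ab cv.
pose A := [set r : 'rV[R]_4 | forall j, `[a (toI j), b (toI j)]%classic (r ord0 j)]%classic.
have cA : compact A.
  exact: (@rV_compact _ 4 (fun j => `[a (toI j), b (toI j)]%classic) (fun j => @segment_compact _ _ _)).
have A0 : (A !=set0)%classic.
  exists (\row_j a (toI j))%R => j /=; rewrite mxE in_itv /= lexx /=.
  by apply/RleP.
have cf : {within A, continuous (v \o pt_of)}%classic.
  apply: continuous_subspaceT => r.
  rewrite /continuous_at; apply/(@cvgrPdist_lt _ R^o _ (nbhs r) (nbhs_filter r)) => e /RltP e0.
  have [d [/RltP d0 Hd]] := cv (pt_of r) e e0.
  have hc j : \forall t \near r, (`|r ord0 j - (t : 'rV[R]_4) ord0 j| < d)%R.
    have := @coord_continuous R 1 4 ord0 j r.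
    by move/cvgrPdist_lt => /(_ d d0).
  near=> t.
  have := Hd (pt_of t).
  move=> H; apply/RltP; rewrite /= -RabsE Rabs_minus_sym; apply: H => i.
  rewrite Rabs_minus_sym RabsE; apply/RltP; rewrite /pt_of.
  by case: i; near: t; apply: hc.
have [c cA' Hc] := EVT_min_rV A0 cA cf.
exists (pt_of c); split.
  move=> i; rewrite inE in cA'; have := cA' (ofI i).
  rewrite toI_ofI /= in_itv /= => /andP[h1 h2]; split; apply/RleP => //.
move=> y Hy.
have -> : y = pt_of (\row_j y (toI j))%R.
  by apply: functional_extensionality => i; rewrite /pt_of mxE toI_ofI.
apply/RleP; apply: Hc; rewrite inE => j /=; rewrite mxE in_itv /=.
by have [h1 h2] := Hy (toI j); apply/andP; split; apply/RleP.
Unshelve. all: by end_near.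
Qed.

End BoxM.


Lemma upd_eq x i t : upd x i t i = t.
Proof. unfold upd; destruct i; reflexivity. Qed.

Lemma upd_neq x i j t : idx4_eqb i j = false -> upd x i t j = x j.
Proof. unfold upd; intros H; rewrite H; reflexivity. Qed.

Lemma upd_upd x i s t : upd (upd x i s) i t = upd x i t.
Proof. apply functional_extensionality; intro j; unfold upd; destruct (idx4_eqb i j); reflexivity. Qed.

Lemma upd_same x i : upd x i (x i) = x.
Proof. apply functional_extensionality; intro j; unfold upd; destruct i, j; reflexivity. Qed.

Lemma upd_comm x i m s t : idx4_eqb i m = false ->
  upd (upd x m s) i t = upd (upd x i t) m s.
Proof. intro H; apply functional_extensionality; intro j; unfold upd;
  destruct i, m, j; simpl in *; try reflexivity; discriminate. Qed.

Lemma eqb_true i j : idx4_eqb i j = true -> i = j.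
Proof. destruct i, j; simpl; intros H; try reflexivity; discriminate. Qed.

Lemma eqb_refl i : idx4_eqb i i = true.
Proof. destruct i; reflexivity. Qed.

Lemma isd_plus (f g : R -> R) (x df dg : R) : is_derive f x df -> is_derive g x dg ->
  is_derive (fun t => f t + g t) x (df + dg).
Proof. intros; apply (is_derive_plus f g x df dg); assumption. Qed.

Lemma isd_scal (f : R -> R) (k x df : R) : is_derive f x df ->
  is_derive (fun t => k * f t) x (k * df).
Proof. intros; apply is_derive_scal; assumption. Qed.

Lemma isd_ext (f g : R -> R) (x l : R) : (forall t, f t = g t) -> is_derive f x l -> is_derive g x l.
Proof. intros; eapply is_derive_ext; eauto. Qed.

Lemma isd_val (f : R -> R) (x l l' : R) : is_derive f x l -> l = l' -> is_derive f x l'.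
Proof. intros; subst; auto. Qed.

Lemma isd_const (a x : R) : is_derive (fun _ : R => a) x 0.
Proof. apply (is_derive_const a x). Qed.

Definition D2 (w : pt -> R) (w1 w2 : idx4 -> pt -> R) : Prop :=
  (forall x i t, is_derive (fun s => w (upd x i s)) t (w1 i (upd x i t))) /\
  (forall x i, is_derive (fun s => w1 i (upd x i s)) (x i) (w2 i x)).

Definition Lap2 (w2 : idx4 -> pt -> R) (x : pt) : R :=
  w2 I0 x + w2 I1 x + w2 I2 x + w2 I3 x.

Lemma D2_plus (w : pt -> R) w1 w2 (v : pt -> R) v1 v2 : D2 w w1 w2 -> D2 v v1 v2 ->
  D2 (fun x => w x + v x) (fun i x => w1 i x + v1 i x) (fun i x => w2 i x + v2 i x).
Proof.
  intros [A1 A2] [B1 B2]; split; intros.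
  - apply isd_plus; auto.
  - apply isd_plus; auto.
Qed.

Lemma D2_scal (k : R) (w : pt -> R) w1 w2 : D2 w w1 w2 ->
  D2 (fun x => k * w x) (fun i x => k * w1 i x) (fun i x => k * w2 i x).
Proof.
  intros [A1 A2]; split; intros.
  - apply isd_scal; auto.
  - apply isd_scal; auto.
Qed.

Definition sep (c : idx4 -> R -> R) (x : pt) : R :=
  c I0 (x I0) + c I1 (x I1) + c I2 (x I2) + c I3 (x I3).

Lemma sep_upd c x i s : sep c (upd x i s) = c i s + (sep c x - c i (x i)).
Proof. unfold sep, upd; destruct i; simpl; ring. Qed.

Lemma D2_sep (c c1 c2 : idx4 -> R -> R) : (forall j t, is_derive (c j) t (c1 j t)) ->
  (forall j t, is_derive (c1 j) t (c2 j t)) ->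
  D2 (sep c) (fun i x => c1 i (x i)) (fun i x => c2 i (x i)).
Proof.
  intros H1 H2; split; intros.
  - rewrite upd_eq.
    apply isd_ext with (f := fun s => c i s + (sep c x - c i (x i))).
    + intros; rewrite sep_upd; reflexivity.
    + eapply isd_val; [apply isd_plus; [apply H1| apply isd_const] | apply Rplus_0_r].
  - apply isd_ext with (f := c1 i). intros; rewrite upd_eq; reflexivity. auto.
Qed.

Lemma D2_coord k (g g1 g2 : R -> R) : (forall t, is_derive g t (g1 t)) ->
  (forall t, is_derive g1 t (g2 t)) ->
  D2 (fun x => g (x k)) (fun i x => if idx4_eqb i k then g1 (x k) else 0)
     (fun i x => if idx4_eqb i k then g2 (x k) else 0).
Proof.
  intros H1 H2; split; intros.
  - destruct (idx4_eqb i k) eqn:E.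
    + apply eqb_true in E; subst. rewrite upd_eq.
      apply isd_ext with (f := g). intros; rewrite upd_eq; auto. auto.
    + apply isd_ext with (f := fun _ => g (x k)). intros; rewrite upd_neq; auto.
      apply isd_const.
  - destruct (idx4_eqb i k) eqn:E.
    + apply eqb_true in E; subst.
      apply isd_ext with (f := g1). intros; rewrite upd_eq; auto. auto.
    + apply isd_const.
Qed.

Lemma sdt (H H1 : R -> R) (h2 t0 a b : R) : a < t0 < b ->
  (forall t, a < t < b -> H t0 <= H t) ->
  (forall t, a < t < b -> is_derive H t (H1 t)) ->
  is_derive H1 t0 h2 -> 0 <= h2.
Proof.
  intros [at0 t0b] Hmin HD HD2.
  assert (Z : H1 t0 = 0).
  { assert (pr : derivable_pt H t0).
    { exists (H1 t0). apply is_derive_Reals. apply HD; lra. }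
    assert (E := deriv_minimum H a b t0 pr at0 t0b (fun x h1 h2 => Hmin x (conj h1 h2))).
    rewrite <- E. symmetry. apply derive_pt_eq_0. apply is_derive_Reals. apply HD; lra. }
  destruct (Rle_lt_dec 0 h2) as [|Hneg]; [assumption|exfalso].
  apply is_derive_Reals in HD2.
  destruct (HD2 (- h2 / 2)) as [del Hdel]; [lra|].
  set (t1 := t0 + Rmin (del / 2) ((b - t0) / 2)).
  assert (Hm1 : 0 < Rmin (del / 2) ((b - t0) / 2)).
  { apply Rmin_pos; destruct del; simpl; lra. }
  assert (Hm2 : Rmin (del / 2) ((b - t0) / 2) <= del / 2) by apply Rmin_l.
  assert (Hm3 : Rmin (del / 2) ((b - t0) / 2) <= (b - t0) / 2) by apply Rmin_r.
  destruct (MVT_cor2 H H1 t0 t1) as [c [Ec Hc]].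
  { unfold t1; lra. }
  { intros c Hc; apply is_derive_Reals; apply HD; unfold t1 in Hc; lra. }
  assert (Hneg1 : H1 c < 0).
  { assert (hpos : 0 < c - t0) by lra.
    assert (Hq := Hdel (c - t0) (Rgt_not_eq _ _ hpos)).
    replace (t0 + (c - t0)) with c in Hq by ring.
    rewrite Z in Hq.
    assert (Habs : Rabs (c - t0) < del).
    { rewrite Rabs_right by lra. unfold t1 in Hc. destruct del; simpl in *; lra. }
    specialize (Hq Habs).
    apply Rabs_def2 in Hq. destruct Hq as [Hq _].
    assert (Hq2 : (H1 c - 0) / (c - t0) < 0) by lra.
    unfold Rdiv in Hq2. rewrite Rminus_0_r in Hq2.
    destruct (Rle_lt_dec 0 (H1 c)) as [Hge|]; [|assumption].
    exfalso. assert (0 <= H1 c * / (c - t0)).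
    { apply Rmult_le_pos; [assumption|]. left; apply Rinv_0_lt_compat; lra. }
    lra. }
  assert (Hmin1 := Hmin t1 ltac:(unfold t1; lra)).
  assert (0 < t1 - t0) by (unfold t1; lra).
  assert (H1 c * (t1 - t0) < 0).
  { apply Ropp_lt_cancel. rewrite Ropp_0. replace (- (H1 c * (t1 - t0))) with ((- H1 c) * (t1 - t0)) by ring.
    apply Rmult_lt_0_compat; lra. }
  lra.
Qed.


Lemma cpt_eps (f : R -> R) x eps : continuity_pt f x -> 0 < eps ->
  exists d, 0 < d /\ forall y, Rabs (y - x) < d -> Rabs (f y - f x) < eps.
Proof.
  intros H He. destruct (H eps He) as [d [Hd Hy]].
  exists d; split; auto. intros y Hyd.
  destruct (Req_dec y x) as [->|Hne].
  - unfold Rminus; rewrite Rplus_opp_r, Rabs_R0; auto.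
  - apply (Hy y). split. split. exact I. auto. exact Hyd.
Qed.

Lemma isd_cont (f f1 : R -> R) : (forall t, is_derive f t (f1 t)) -> forall t, continuity_pt f t.
Proof.
  intros H t. apply derivable_continuous_pt. exists (f1 t). apply is_derive_Reals; auto.
Qed.

Lemma cont4_plus (f g : pt -> R) : cont4 f -> cont4 g -> cont4 (fun x => f x + g x).
Proof.
  intros Hf Hg x eps He.
  destruct (Hf x (eps/2)) as [d1 [Hd1 H1]]; [lra|].
  destruct (Hg x (eps/2)) as [d2 [Hd2 H2]]; [lra|].
  exists (Rmin d1 d2); split. apply Rmin_pos; auto.
  intros y Hy.
  assert (A1 : Rabs (f y - f x) < eps/2). { apply H1; intro i; specialize (Hy i); assert (Rmin d1 d2 <= d1) by apply Rmin_l; lra. }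
  assert (A2 : Rabs (g y - g x) < eps/2). { apply H2; intro i; specialize (Hy i); assert (Rmin d1 d2 <= d2) by apply Rmin_r; lra. }
  replace (f y + g y - (f x + g x)) with ((f y - f x) + (g y - g x)) by ring.
  eapply Rle_lt_trans; [apply Rabs_triang|]. lra.
Qed.

Lemma cont4_scal (k : R) (f : pt -> R) : cont4 f -> cont4 (fun x => k * f x).
Proof.
  intros Hf x eps He.
  destruct (Hf x (eps / (Rabs k + 1))) as [d [Hd H1]].
  { apply Rdiv_lt_0_compat; auto. assert (0 <= Rabs k) by apply Rabs_pos. lra. }
  exists d; split; auto. intros y Hy.
  replace (k * f y - k * f x) with (k * (f y - f x)) by ring.
  rewrite Rabs_mult.
  assert (0 <= Rabs k) by apply Rabs_pos.
  specialize (H1 y Hy).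
  assert (Hk : Rabs k * Rabs (f y - f x) <= Rabs k * (eps / (Rabs k + 1))).
  { apply Rmult_le_compat_l; lra. }
  assert (Rabs k * (eps / (Rabs k + 1)) < eps).
  { unfold Rdiv. replace (Rabs k * (eps * / (Rabs k + 1))) with (eps * (Rabs k / (Rabs k + 1))) by (field; lra).
    assert (Rabs k / (Rabs k + 1) < 1). { apply (Rmult_lt_reg_r (Rabs k + 1)); [lra|]. unfold Rdiv. rewrite Rmult_assoc, Rinv_l by lra. lra. }
    nra. }
  lra.
Qed.

Lemma cont4_sep (c : idx4 -> R -> R) : (forall j t, continuity_pt (c j) t) -> cont4 (sep c).
Proof.
  intros Hc x eps He.
  destruct (cpt_eps (c I0) (x I0) (eps/4) (Hc _ _)) as [d0 [D0 H0]]; [lra|].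
  destruct (cpt_eps (c I1) (x I1) (eps/4) (Hc _ _)) as [d1 [D1 H1]]; [lra|].
  destruct (cpt_eps (c I2) (x I2) (eps/4) (Hc _ _)) as [d2 [D2' H2]]; [lra|].
  destruct (cpt_eps (c I3) (x I3) (eps/4) (Hc _ _)) as [d3 [D3 H3]]; [lra|].
  exists (Rmin (Rmin d0 d1) (Rmin d2 d3)); split.
  { repeat apply Rmin_pos; auto. }
  intros y Hy.
  assert (m1 := Rmin_l (Rmin d0 d1) (Rmin d2 d3)). assert (m2 := Rmin_r (Rmin d0 d1) (Rmin d2 d3)).
  assert (m3 := Rmin_l d0 d1). assert (m4 := Rmin_r d0 d1). assert (m5 := Rmin_l d2 d3). assert (m6 := Rmin_r d2 d3).
  assert (A0 := H0 (y I0) ltac:(specialize (Hy I0); lra)).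
  assert (A1 := H1 (y I1) ltac:(specialize (Hy I1); lra)).
  assert (A2 := H2 (y I2) ltac:(specialize (Hy I2); lra)).
  assert (A3 := H3 (y I3) ltac:(specialize (Hy I3); lra)).
  unfold sep.
  replace (c I0 (y I0) + c I1 (y I1) + c I2 (y I2) + c I3 (y I3) -
    (c I0 (x I0) + c I1 (x I1) + c I2 (x I2) + c I3 (x I3))) with
    ((c I0 (y I0) - c I0 (x I0)) + (c I1 (y I1) - c I1 (x I1)) + (c I2 (y I2) - c I2 (x I2)) + (c I3 (y I3) - c I3 (x I3))) by ring.
  repeat (eapply Rle_lt_trans; [apply Rabs_triang|]).
  eapply Rle_lt_trans; [apply Rplus_le_compat_r; apply Rabs_triang|].
  eapply Rle_lt_trans; [apply Rplus_le_compat_r; apply Rplus_le_compat_r; apply Rabs_triang|].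
  lra.
Qed.

Definition inbox (a b x : pt) : Prop := forall i, a i <= x i <= b i.

Lemma inbox_upd a b q i t : inbox a b q -> a i <= t <= b i -> inbox a b (upd q i t).
Proof.
  intros Hq Ht j. unfold upd. destruct (idx4_eqb i j) eqn:E.
  - apply eqb_true in E; subst; auto.
  - auto.
Qed.

Lemma sq_le (a b x y : R) : a <= x <= b -> a <= y <= b -> (x - y)^2 <= (b - a)^2.
Proof. intros. nra. Qed.

Lemma D2_min (v : pt -> R) v1 v2 (a b q : pt) : D2 v v1 v2 ->
  inbox a b q -> (forall i, a i < q i < b i) ->
  (forall y, inbox a b y -> v q <= v y) -> forall i, 0 <= v2 i q.
Proof.
  intros [Hd1 Hd2] Hq Hint Hmin i.
  apply (sdt (fun s => v (upd q i s)) (fun s => v1 i (upd q i s)) (v2 i q) (q i) (a i) (b i)).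
  - auto.
  - intros t Ht. rewrite upd_same. apply Hmin. apply inbox_upd; auto; lra.
  - intros t Ht. apply Hd1.
  - apply Hd2.
Qed.

Lemma MP (w : pt -> R) w1 w2 (a b : pt) : (forall i, a i < b i) -> cont4 w -> D2 w w1 w2 ->
  (forall x, Lap2 w2 x <= 0) ->
  (forall x, inbox a b x -> ~ (forall i, a i < x i < b i) -> 0 <= w x) ->
  forall x, inbox a b x -> 0 <= w x.
Proof.
  intros Hab Hc HD HL Hbd p Hp.
  destruct (Rle_lt_dec 0 (w p)) as [|Hneg]; [assumption|exfalso].
  set (L := sep (fun j _ => (b j - a j)^2) p).
  assert (HL0 : 0 < L).
  { unfold L, sep. assert (H0 := Hab I0). assert (0 < (b I0 - a I0)^2) by (apply pow_lt; lra).
    assert (0 <= (b I1 - a I1)^2) by apply pow2_ge_0. assert (0 <= (b I2 - a I2)^2) by apply pow2_ge_0.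
    assert (0 <= (b I3 - a I3)^2) by apply pow2_ge_0. lra. }
  set (eps := - w p / (2 * L)).
  assert (Heps : 0 < eps) by (unfold eps; apply Rdiv_lt_0_compat; lra).
  set (sqc := fun (j : idx4) (s : R) => (s - p j)^2).
  set (v := fun x => w x + (- eps) * sep sqc x).
  assert (Hvc : cont4 v).
  { apply cont4_plus; auto. apply cont4_scal. apply cont4_sep.
    intros j; apply (isd_cont _ (fun s => 2 * (s - p j))). intro t. unfold sqc. auto_derive; auto; ring. }
  assert (HvD : D2 v (fun i x => w1 i x + (- eps) * (2 * (x i - p i))) (fun i x => w2 i x + (- eps) * 2)).
  { apply D2_plus; auto. apply D2_scal.
    apply (D2_sep sqc (fun j s => 2 * (s - p j)) (fun j s => 2)).
    - intros j t; unfold sqc; auto_derive; auto; ring.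
    - intros j t; auto_derive; auto; ring. }
  destruct (BoxM.box_min v a b) as [q [Hq Hmin]]; auto.
  { intro i; left; auto. }
  assert (Hsq : forall x, inbox a b x -> sep sqc x <= L).
  { intros x Hx. unfold L, sep, sqc; cbv beta.
    assert (A0 := sq_le _ _ _ _ (Hx I0) (Hp I0)). assert (A1 := sq_le _ _ _ _ (Hx I1) (Hp I1)).
    assert (A2 := sq_le _ _ _ _ (Hx I2) (Hp I2)). assert (A3 := sq_le _ _ _ _ (Hx I3) (Hp I3)). lra. }
  assert (Hsq0 : forall x, 0 <= sep sqc x).
  { intros x; unfold sep, sqc. assert (H0 := pow2_ge_0 (x I0 - p I0)). assert (H1 := pow2_ge_0 (x I1 - p I1)).
    assert (H2 := pow2_ge_0 (x I2 - p I2)). assert (H3 := pow2_ge_0 (x I3 - p I3)). lra. }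
  assert (Hvp : v p = w p).
  { unfold v, sep, sqc. unfold Rminus. rewrite !Rplus_opp_r. simpl. ring. }
  assert (Hint : forall i, a i < q i < b i).
  { apply NNPP; intro Hn.
    assert (Hwq := Hbd q Hq Hn).
    assert (Hvq := Hmin p Hp).
    assert (Hs := Hsq q Hq).
    assert (v q >= w q - eps * L).
    { unfold v. assert (eps * sep sqc q <= eps * L) by (apply Rmult_le_compat_l; lra). lra. }
    assert (eps * L = - w p / 2).
    { unfold eps. field. lra. }
    lra. }
  assert (Hpos := D2_min v _ _ a b q HvD Hq Hint Hmin).
  assert (HLq := HL q).
  unfold Lap2 in HLq.
  assert (P0 := Hpos I0). assert (P1 := Hpos I1). assert (P2 := Hpos I2). assert (P3 := Hpos I3).
  simpl in P0, P1, P2, P3. lra.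
Qed.


Lemma eqb_sym i j : idx4_eqb i j = idx4_eqb j i.
Proof. destruct i, j; reflexivity. Qed.

Definition refl (k : idx4) (p x : pt) : pt := upd x k (2 * p k - x k).

Lemma refl_upd_neq k p x i s : idx4_eqb i k = false ->
  refl k p (upd x i s) = upd (refl k p x) i s.
Proof.
  intros E. unfold refl. rewrite upd_neq by auto.
  rewrite upd_comm; [reflexivity | rewrite eqb_sym; auto].
Qed.

Lemma refl_upd_eq k p x s : refl k p (upd x k s) = upd (refl k p x) k (2 * p k - s).
Proof. unfold refl. rewrite !upd_upd, upd_eq. reflexivity. Qed.

Lemma refl_neq k p x i : idx4_eqb i k = false -> refl k p x i = x i.
Proof. intros E; unfold refl; apply upd_neq; rewrite eqb_sym; auto. Qed.

Lemma refl_eq k p x : refl k p x k = 2 * p k - x k.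
Proof. unfold refl; apply upd_eq. Qed.

Lemma isd_refl (F : R -> R) (c t l : R) : is_derive F (c - t) l ->
  is_derive (fun s => F (c - s)) t (- l).
Proof.
  intros H.
  assert (Hg : is_derive (fun s : R => c - s) t (-1)) by (auto_derive; auto; ring).
  assert (H2 := is_derive_comp F (fun s => c - s) t l (-1) H Hg).
  eapply isd_val; [exact H2|]. unfold scal; simpl; unfold mult; simpl. ring.
Qed.

Lemma D2_refl k p (u : pt -> R) u1 u2 : D2 u u1 u2 ->
  D2 (fun x => u (refl k p x))
     (fun i x => if idx4_eqb i k then - u1 i (refl k p x) else u1 i (refl k p x))
     (fun i x => u2 i (refl k p x)).
Proof.
  intros [H1 H2]; split; intros x i.
  - intros t. destruct (idx4_eqb i k) eqn:E.
    + apply eqb_true in E; subst i.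
      apply isd_ext with (f := fun s => u (upd (refl k p x) k (2 * p k - s))).
      { intros s; rewrite refl_upd_eq; reflexivity. }
      rewrite refl_upd_eq.
      apply (isd_refl (fun r => u (upd (refl k p x) k r))). apply H1.
    + apply isd_ext with (f := fun s => u (upd (refl k p x) i s)).
      { intros s; rewrite refl_upd_neq; auto. }
      rewrite refl_upd_neq by auto. apply H1.
  - destruct (idx4_eqb i k) eqn:E.
    + apply eqb_true in E; subst i.
      apply isd_ext with (f := fun s => - u1 k (upd (refl k p x) k (2 * p k - s))).
      { intros s; rewrite refl_upd_eq; reflexivity. }
      replace (u2 k (refl k p x)) with (- - u2 k (refl k p x)) by ring.
      apply isd_ext with (f := fun s => (-1) * u1 k (upd (refl k p x) k (2 * p k - s))).
      { intros; ring. }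
      eapply isd_val; [apply isd_scal|].
      apply (isd_refl (fun r => u1 k (upd (refl k p x) k r))).
      rewrite <- refl_eq. apply H2. ring.
    + apply isd_ext with (f := fun s => u1 i (upd (refl k p x) i s)).
      { intros s; rewrite refl_upd_neq; auto. }
      rewrite <- (refl_neq k p x i E). apply H2.
Qed.

Lemma cont4_refl k p (u : pt -> R) : cont4 u -> cont4 (fun x => u (refl k p x)).
Proof.
  intros Hu x eps He. destruct (Hu (refl k p x) eps He) as [d [Hd H]].
  exists d; split; auto. intros y Hy. apply H. intros i.
  unfold refl, upd. destruct (idx4_eqb k i) eqn:E.
  - apply eqb_true in E; subst i. specialize (Hy k).
    replace (2 * p k - y k - (2 * p k - x k)) with (- (y k - x k)) by ring.
    rewrite Rabs_Ropp; auto.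
  - auto.
Qed.

Lemma cont4_coord k (g : R -> R) : (forall t, continuity_pt g t) -> cont4 (fun x => g (x k)).
Proof.
  intros Hg x eps He. destruct (cpt_eps g (x k) eps (Hg _) He) as [d [Hd H]].
  exists d; split; auto.
Qed.

Lemma abs_bd z M : Rabs z <= M -> - M <= z <= M.
Proof. unfold Rabs; destruct (Rcase_abs z); intros; lra. Qed.

Section Liou.
Variables (u : pt -> R) (u1 u2 : idx4 -> pt -> R) (M : R).
Hypothesis Hc : cont4 u.
Hypothesis HD : D2 u u1 u2.
Hypothesis HL : forall x, Lap2 u2 x = 0.
Hypothesis HM : forall x, Rabs (u x) <= M.

Lemma M_nonneg : 0 <= M.
Proof. eapply Rle_trans; [apply Rabs_pos | apply (HM (fun _ => 0))]. Qed.

Lemma sym_bound p k t d : 0 < t < d ->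
  Rabs (u (upd p k (p k + t)) - u (upd p k (p k - t))) <= 8 * M * t / d.
Proof.
  intros [Ht Htd].
  assert (HM0 := M_nonneg).
  set (K := M / (d * d)).
  assert (HK : 0 <= K) by (unfold K; apply Rdiv_le_0_compat; nra).
  assert (HKd : K * (d * d) = M) by (unfold K; field; lra).
  set (sqc := fun (j : idx4) (s : R) => (s - p j)^2).
  set (g := fun s : R => (s - p k) * (4 * d - 4 * (s - p k))).
  set (psi := fun x : pt => K * (sep sqc x + g (x k))).
  set (a := fun i => if idx4_eqb i k then p k else p i - d).
  set (b := fun i => p i + d).
  assert (Hab : forall i, a i < b i).
  { intros i; unfold a, b; destruct (idx4_eqb i k) eqn:E; [apply eqb_true in E; subst i|]; lra. }
  assert (Hpsi : forall s, s = 1 \/ s = -1 ->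
     forall x, inbox a b x -> 0 <= psi x + (s / 2) * u x + (- (s / 2)) * u (refl k p x)).
  { intros s Hs.
    set (w := fun x => psi x + (s / 2) * u x + (- (s / 2)) * u (refl k p x)).
    assert (HwD : D2 w
      (fun i x => K * (2 * (x i - p i) + (if idx4_eqb i k then 4 * d - 8 * (x k - p k) else 0))
         + (s / 2) * u1 i x + (- (s / 2)) * (if idx4_eqb i k then - u1 i (refl k p x) else u1 i (refl k p x)))
      (fun i x => K * (2 + (if idx4_eqb i k then -8 else 0)) + (s / 2) * u2 i x + (- (s / 2)) * u2 i (refl k p x))).
    { apply D2_plus; [apply D2_plus|].
      - apply D2_scal. apply D2_plus.
        + apply (D2_sep sqc (fun j s => 2 * (s - p j)) (fun j s => 2)).
          * intros j t0; unfold sqc; auto_derive; auto; ring.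
          * intros j t0; auto_derive; auto; ring.
        + apply (D2_coord k g (fun s => 4 * d - 8 * (s - p k)) (fun _ => -8)).
          * intros t0; unfold g; auto_derive; auto; ring.
          * intros t0; auto_derive; auto; ring.
      - apply D2_scal; auto.
      - apply D2_scal. apply D2_refl; auto. }
    assert (Hwc : cont4 w).
    { apply cont4_plus; [apply cont4_plus|].
      - apply cont4_scal. apply cont4_plus.
        + apply cont4_sep. intros j; apply (isd_cont _ (fun s => 2 * (s - p j))).
          intros t0; unfold sqc; auto_derive; auto; ring.
        + apply cont4_coord. apply (isd_cont _ (fun s => 4 * d - 8 * (s - p k))).
          intros t0; unfold g; auto_derive; auto; ring.
      - apply cont4_scal; auto.
      - apply cont4_scal; apply cont4_refl; auto. }
    apply (MP w _ _ a b Hab Hwc HwD).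
    - intros x. unfold Lap2. assert (H1 := HL x). assert (H2 := HL (refl k p x)). unfold Lap2 in H1, H2.
      destruct k; simpl; nra.
    - intros x Hx Hn.
      apply not_all_ex_not in Hn. destruct Hn as [i Hi].
      assert (Hxi := Hx i).
      assert (Hxk := Hx k).
      unfold a, b in Hxk. rewrite eqb_refl in Hxk.
      assert (Bu := abs_bd _ _ (HM x)). assert (Bur := abs_bd _ _ (HM (refl k p x))).
      assert (SQ0 : forall j, 0 <= sqc j (x j)) by (intros; unfold sqc; apply pow2_ge_0).
      assert (SQk : (x k - p k)^2 <= sep sqc x).
      { unfold sep. assert (A0 := SQ0 I0). assert (A1 := SQ0 I1). assert (A2 := SQ0 I2). assert (A3 := SQ0 I3).
        destruct k; unfold sqc in *; simpl in *; lra. }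
      assert (Hg0 : 0 <= g (x k)) by (unfold g; nra).
      unfold w, psi.
      destruct (idx4_eqb i k) eqn:E.
      + apply eqb_true in E; subst i.
        unfold a, b in Hi. rewrite eqb_refl in Hi.
        destruct (Req_dec (x k) (p k)) as [Ek|Nk].
        * assert (Er : refl k p x = x).
          { unfold refl. rewrite Ek. replace (2 * p k - p k) with (p k) by ring. rewrite <- Ek. apply upd_same. }
          rewrite Er. assert (0 <= sep sqc x) by (assert (Q := pow2_ge_0 (x k - p k)); lra).
          assert (0 <= K * (sep sqc x + g (x k))) by (apply Rmult_le_pos; lra).
          destruct Hs; subst s; lra.
        * assert (Ek : x k = p k + d) by lra.
          assert (Hge : M <= K * (sep sqc x + g (x k))).
          { rewrite <- HKd. apply Rmult_le_compat_l; auto.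
            unfold g. rewrite Ek in SQk |- *. replace (p k + d - p k) with d in * by ring. nra. }
          destruct Hs; subst s; lra.
      + unfold a, b in Hi, Hxi. rewrite E in Hi, Hxi.
        assert (Ei : (x i - p i)^2 = d * d).
        { assert (x i = p i - d \/ x i = p i + d) as [e|e] by lra; rewrite e; ring. }
        assert (SQik : (x i - p i)^2 + (x k - p k)^2 <= sep sqc x).
        { unfold sep. assert (A0 := SQ0 I0). assert (A1 := SQ0 I1). assert (A2 := SQ0 I2). assert (A3 := SQ0 I3).
          destruct i, k; simpl in E; try discriminate; unfold sqc in *; simpl in *; lra. }
        assert (Hge : M <= K * (sep sqc x + g (x k))).
        { rewrite <- HKd. apply Rmult_le_compat_l; auto.
          unfold g in *. nra. }
        destruct Hs; subst s; lra. }
  set (xs := upd p k (p k + t)).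
  assert (Hpbox : inbox a b p).
  { intros i; unfold a, b; destruct (idx4_eqb i k) eqn:E; [apply eqb_true in E; subst i|]; lra. }
  assert (Hxs : inbox a b xs).
  { apply inbox_upd; auto. unfold a, b; rewrite eqb_refl; lra. }
  assert (Erx : refl k p xs = upd p k (p k - t)).
  { unfold xs, refl. rewrite upd_upd, upd_eq. f_equal. ring. }
  assert (Epsi : psi xs = K * (t * t + t * (4 * d - 4 * t))).
  { unfold psi, xs. rewrite sep_upd, upd_eq. unfold g, sqc, sep. f_equal. ring. }
  assert (Hp1 := Hpsi 1 (or_introl eq_refl) xs Hxs).
  assert (Hm1 := Hpsi (-1) (or_intror eq_refl) xs Hxs).
  rewrite Erx, Epsi in Hp1, Hm1. fold xs.
  assert (Hb : K * (t * t + t * (4 * d - 4 * t)) <= 4 * M * t / d).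
  { replace (4 * M * t / d) with (K * (4 * d * t)) by (unfold K; field; lra).
    apply Rmult_le_compat_l; auto. nra. }
  replace (8 * M * t / d) with (2 * (4 * M * t / d)) by (field; lra).
  unfold Rabs; destruct (Rcase_abs _); lra.
Qed.

Lemma sym_eq p k t : 0 < t ->
  u (upd p k (p k + t)) = u (upd p k (p k - t)).
Proof.
  intros Ht.
  set (D := Rabs (u (upd p k (p k + t)) - u (upd p k (p k - t)))).
  assert (HM0 := M_nonneg).
  destruct (Req_dec D 0) as [H0|Hn].
  - unfold D in H0. destruct (Req_dec (u (upd p k (p k + t)) - u (upd p k (p k - t))) 0) as [e|e].
    + lra.
    + exfalso. apply e. apply Rabs_eq_0 in H0. exact H0.
  - exfalso. assert (HD0 : 0 < D) by (unfold D in *; assert (Q := Rabs_pos (u (upd p k (p k + t)) - u (upd p k (p k - t)))); lra).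
    set (d := t + 8 * M * t / D + 1).
    assert (Hd1 : 0 <= 8 * M * t / D) by (apply Rdiv_le_0_compat; nra).
    assert (Hb := sym_bound p k t d ltac:(unfold d; lra)).
    fold D in Hb.
    assert (Hdpos : 0 < d) by (unfold d; lra).
    assert (8 * M * t / d < D).
    { apply (Rmult_lt_reg_r d); auto. unfold Rdiv. rewrite Rmult_assoc, Rinv_l by lra.
      unfold d. rewrite Rmult_1_r. replace (D * (t + 8 * M * t / D + 1)) with (D * t + 8 * M * t + D) by (field; lra). assert (0 < D * t) by (apply Rmult_lt_0_compat; lra). lra. }
    lra.
Qed.

Lemma shift_inv y k s : u (upd y k s) = u y.
Proof.
  destruct (Rtotal_order s (y k)) as [Hl|[He|Hg]].
  - set (p := upd y k ((y k + s) / 2)).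
    assert (E := sym_eq p k ((y k - s) / 2) ltac:(lra)).
    unfold p in E. rewrite !upd_upd, upd_eq in E.
    replace ((y k + s) / 2 + (y k - s) / 2) with (y k) in E by field.
    replace ((y k + s) / 2 - (y k - s) / 2) with s in E by field.
    rewrite upd_same in E. auto.
  - rewrite He, upd_same; auto.
  - set (p := upd y k ((y k + s) / 2)).
    assert (E := sym_eq p k ((s - y k) / 2) ltac:(lra)).
    unfold p in E. rewrite !upd_upd, upd_eq in E.
    replace ((y k + s) / 2 + (s - y k) / 2) with s in E by field.
    replace ((y k + s) / 2 - (s - y k) / 2) with (y k) in E by field.
    rewrite upd_same in E. auto.
Qed.

Lemma liouville x y : u x = u y.
Proof.
  assert (Ex : x = upd (upd (upd (upd y I0 (x I0)) I1 (x I1)) I2 (x I2)) I3 (x I3)).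
  { apply functional_extensionality; intros j; destruct j; reflexivity. }
  rewrite Ex, !shift_inv. reflexivity.
Qed.
End Liou.


Lemma Ck_mono k h : Ck (S k) h -> Ck k h.
Proof.
  revert h; induction k; intros h H.
  - destruct H; auto.
  - destruct H as [Hc H]. split; auto. intros i; destruct (H i) as [A B]. split; auto.
Qed.

Lemma Ck_cont k h : Ck k h -> cont4 h.
Proof. destruct k; simpl; tauto. Qed.

Lemma partial_at j h y s : partial j h (upd y j s) = Derive (fun r => h (upd y j r)) s.
Proof.
  unfold partial. rewrite upd_eq. apply Derive_ext. intros; rewrite upd_upd; reflexivity.
Qed.

Lemma pex_at j h : partial_ex j h -> forall y s, ex_derive (fun r => h (upd y j r)) s.
Proof.
  intros H y s. assert (H1 := H (upd y j s)). rewrite upd_eq in H1.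
  eapply ex_derive_ext; [|exact H1]. intros; simpl; rewrite upd_upd; reflexivity.
Qed.

Lemma D2_of_C (g : pt -> R) : (forall i, partial_ex i g) -> (forall i, partial_ex i (partial i g)) ->
  D2 g (fun i => partial i g) (fun i => partial i (partial i g)).
Proof.
  intros H1 H2; split.
  - intros x i t. rewrite partial_at. apply Derive_correct. apply pex_at; auto.
  - intros x i. apply Derive_correct. apply H2.
Qed.

Lemma upd3 x i m s t r : idx4_eqb i m = false ->
  upd (upd (upd x m s) i t) m r = upd (upd x m r) i t.
Proof.
  intro E; apply functional_extensionality; intro j; unfold upd;
  destruct i, m, j; simpl in *; try reflexivity; discriminate.
Qed.

Lemma cont2_from4 (h : pt -> R) x i m : cont4 h -> idx4_eqb i m = false ->
  continuity_2d_pt (fun u v => h (upd (upd x m u) i v)) (x m) (x i).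
Proof.
  intros Hc E eps. destruct (Hc x eps (cond_pos eps)) as [d [Hd H]].
  exists (mkposreal d Hd). intros u v Hu Hv. simpl in Hu, Hv.
  assert (Ex : upd (upd x m (x m)) i (x i) = x) by (rewrite !upd_same; reflexivity).
  rewrite Ex. apply H. intros j. unfold upd.
  destruct (idx4_eqb i j) eqn:E1; [apply eqb_true in E1; subst j; auto|].
  destruct (idx4_eqb m j) eqn:E2; [apply eqb_true in E2; subst j; auto|].
  unfold Rminus; rewrite Rplus_opp_r, Rabs_R0; auto.
Qed.

Lemma schwarz4 (g : pt -> R) : Ck 2 g -> forall i m x,
  partial m (partial i g) x = partial i (partial m g) x.
Proof.
  intros HC i m x.
  destruct HC as [Hg0 HC].
  destruct (idx4_eqb i m) eqn:E.
  { apply eqb_true in E; subst; reflexivity. }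
  destruct (HC i) as [Pi [Ci HCi]]. destruct (HC m) as [Pm [Cm HCm]].
  destruct (HCi m) as [Pmi Cmi]. destruct (HCm i) as [Pim Cim].
  set (F := fun s t => g (upd (upd x m s) i t)).
  assert (I1 : forall s t, Derive (fun t' => F s t') t = partial i g (upd (upd x m s) i t)).
  { intros; rewrite partial_at; reflexivity. }
  assert (I2 : forall s t, Derive (fun s' => F s' t) s = partial m g (upd (upd x m s) i t)).
  { intros s t. unfold partial. rewrite upd_neq by auto. rewrite upd_eq.
    apply Derive_ext. intros r. unfold F. rewrite upd3 by auto. reflexivity. }
  assert (J1 : forall u v, Derive (fun z => Derive (fun t => F z t) v) u
       = partial m (partial i g) (upd (upd x m u) i v)).
  { intros u v. rewrite (Derive_ext _ (fun z => partial i g (upd (upd x i v) m z))).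
    - rewrite <- partial_at. rewrite upd_comm by (auto || (rewrite eqb_sym; auto)). reflexivity.
    - intros z. rewrite I1. rewrite upd_comm by (auto || (rewrite eqb_sym; auto)). reflexivity. }
  assert (J2 : forall u v, Derive (fun z => Derive (fun t => F t z) u) v
       = partial i (partial m g) (upd (upd x m u) i v)).
  { intros u v. rewrite (Derive_ext _ (fun z => partial m g (upd (upd x m u) i z))).
    - rewrite <- partial_at. reflexivity.
    - intros z. rewrite I2. reflexivity. }
  assert (S := Schwarz F (x m) (x i)).
  rewrite J1, J2 in S.
  rewrite !upd_same in S.
  apply S.
  - exists (mkposreal 1 Rlt_0_1). intros u v _ _. repeat split.
    + apply ex_derive_ext with (f := fun z => g (upd (upd x i v) m z)).
      { intros; unfold F; rewrite upd_comm by (auto || (rewrite eqb_sym; auto)); reflexivity. }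
      apply pex_at; auto.
    + apply pex_at; auto.
    + apply ex_derive_ext with (f := fun z => partial i g (upd (upd x i v) m z)).
      { intros z; rewrite I1, upd_comm by (auto || (rewrite eqb_sym; auto)); reflexivity. }
      apply pex_at; auto.
    + apply ex_derive_ext with (f := fun z => partial m g (upd (upd x m u) i z)).
      { intros z; rewrite I2; reflexivity. }
      apply pex_at; auto.
  - replace (fun u v => Derive (fun z => Derive (fun t => F z t) v) u)
      with (fun u v => partial m (partial i g) (upd (upd x m u) i v)).
    + apply cont2_from4; auto.
    + apply functional_extensionality; intro u; apply functional_extensionality; intro v; rewrite J1; reflexivity.
  - replace (fun u v => Derive (fun z => Derive (fun t => F t z) u) v)
      with (fun u v => partial i (partial m g) (upd (upd x m u) i v)).
    + apply cont2_from4; auto.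
    + apply functional_extensionality; intro u; apply functional_extensionality; intro v; rewrite J2; reflexivity.
Qed.


Lemma partial_plus m (h1 h2 : pt -> R) x : partial_ex m h1 -> partial_ex m h2 ->
  partial m (fun y => h1 y + h2 y) x = partial m h1 x + partial m h2 x.
Proof. intros H1 H2; unfold partial. apply (Derive_plus (fun t => h1 (upd x m t)) (fun t => h2 (upd x m t))); auto. Qed.

Lemma partial_scal m k (h : pt -> R) x : partial m (fun y => k * h y) x = k * partial m h x.
Proof. unfold partial. apply Derive_scal. Qed.

Lemma pex_plus m (h1 h2 : pt -> R) : partial_ex m h1 -> partial_ex m h2 -> partial_ex m (fun y => h1 y + h2 y).
Proof. intros H1 H2 x. apply (ex_derive_plus (fun t => h1 (upd x m t)) (fun t => h2 (upd x m t))); auto. Qed.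

Lemma pex_scal m k (h : pt -> R) : partial_ex m h -> partial_ex m (fun y => k * h y).
Proof. intros H x. apply ex_derive_scal; auto. Qed.

Section C3.
Variable g : pt -> R.
Hypothesis H3 : Ck 3 g.
Lemma C3_p1 i : partial_ex i g. Proof. destruct H3 as [_ H]. destruct (H i) as [A _]. exact A. Qed.
Lemma C3_C2i i : Ck 2 (partial i g). Proof. destruct H3 as [_ H]. destruct (H i) as [_ A]. exact A. Qed.
Lemma C3_p2 i j : partial_ex j (partial i g).
Proof. destruct (C3_C2i i) as [_ H]. destruct (H j) as [A _]. exact A. Qed.
Lemma C3_p3 i j l : partial_ex l (partial j (partial i g)).
Proof. destruct (C3_C2i i) as [_ H]. destruct (H j) as [_ [_ H']]. destruct (H' l) as [A _]. exact A. Qed.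
Lemma C3_c0 : cont4 g. Proof. destruct H3 as [A _]. exact A. Qed.
Lemma C3_c1 i : cont4 (partial i g). Proof. destruct (C3_C2i i) as [A _]. exact A. Qed.
Lemma C3_C2 : Ck 2 g. Proof. apply Ck_mono; auto. Qed.
End C3.

Lemma D2_lin4 (g0 g1 g2 g3 : pt -> R) d0 d1 d2 d3 e0 e1 e2 e3 (k1 k2 k3 : R) :
  D2 g0 d0 e0 -> D2 g1 d1 e1 -> D2 g2 d2 e2 -> D2 g3 d3 e3 ->
  D2 (fun x => g0 x + k1 * g1 x + k2 * g2 x + k3 * g3 x)
     (fun i x => d0 i x + k1 * d1 i x + k2 * d2 i x + k3 * d3 i x)
     (fun i x => e0 i x + k1 * e1 i x + k2 * e2 i x + k3 * e3 i x).
Proof.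
  intros H0 H1 H2 H3.
  apply D2_plus; [apply D2_plus; [apply D2_plus|]|]; try apply D2_scal; auto.
Qed.

Lemma cont4_lin4 (g0 g1 g2 g3 : pt -> R) (k1 k2 k3 : R) :
  cont4 g0 -> cont4 g1 -> cont4 g2 -> cont4 g3 ->
  cont4 (fun x => g0 x + k1 * g1 x + k2 * g2 x + k3 * g3 x).
Proof.
  intros H0 H1 H2 H3.
  apply cont4_plus; [apply cont4_plus; [apply cont4_plus|]|]; try apply cont4_scal; auto.
Qed.

Definition hD (f : pt -> cl) (c1 c2 c3 : bool) (x : pt) : R :=
  partial I0 (fun y => f y (c1, c2, c3)) x
  + sgn (negb c1) * partial I1 (fun y => f y (negb c1, c2, c3)) x
  + sgn c1 * sgn (negb c2) * partial I2 (fun y => f y (c1, negb c2, c3)) x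
  + sgn c1 * sgn c2 * sgn (negb c3) * partial I3 (fun y => f y (c1, c2, negb c3)) x.

Definition PP (f : pt -> cl) (k j : idx4) (C : blade) (x : pt) : R :=
  partial k (partial j (fun y => f y C)) x.
Arguments PP : simpl never.

Section Main.
Variable f : pt -> cl.
Hypothesis HC : forall B, Ck 3 (fun x => f x B).
Hypothesis HDL : forall x B, dirac (laplacian f) x B = 0.
Hypothesis Hb0 : forall B, bounded4 (fun x => f x B).
Hypothesis Hb1 : forall B i, bounded4 (partial i (fun x => f x B)).

Lemma lap_comm C m x : partial m (fun y => laplacian f y C) x =
  Lap2 (fun i => partial i (partial i (partial m (fun y => f y C)))) x.
Proof.
  set (g := fun y => f y C).
  assert (H3 : Ck 3 g) by apply HC.
  change (partial m (fun y => partial I0 (partial I0 g) y + partial I1 (partial I1 g) y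
     + partial I2 (partial I2 g) y + partial I3 (partial I3 g) y) x =
     Lap2 (fun i => partial i (partial i (partial m g))) x).
  set (a0 := partial I0 (partial I0 g)). set (a1 := partial I1 (partial I1 g)).
  set (a2 := partial I2 (partial I2 g)). set (a3 := partial I3 (partial I3 g)).
  assert (P0 : partial_ex m a0) by (apply C3_p3; auto).
  assert (P1 : partial_ex m a1) by (apply C3_p3; auto).
  assert (P2 : partial_ex m a2) by (apply C3_p3; auto).
  assert (P3 : partial_ex m a3) by (apply C3_p3; auto).
  rewrite (partial_plus m (fun y => a0 y + a1 y + a2 y) a3 x (pex_plus _ _ _ (pex_plus _ _ _ P0 P1) P2) P3).
  rewrite (partial_plus m (fun y => a0 y + a1 y) a2 x (pex_plus _ _ _ P0 P1) P2).
  rewrite (partial_plus m a0 a1 x P0 P1).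
  unfold a0, a1, a2, a3.
  assert (E : forall i, partial m (partial i (partial i g)) x = partial i (partial i (partial m g)) x).
  { intros i. rewrite schwarz4 by (apply C3_C2i; auto).
    replace (partial m (partial i g)) with (partial i (partial m g)); [reflexivity|].
    apply functional_extensionality; intro y. symmetry. apply schwarz4. apply C3_C2; auto. }
  unfold Lap2. rewrite !E. reflexivity.
Qed.

Lemma hD_const c1 c2 c3 x : hD f c1 c2 c3 x = hD f c1 c2 c3 (fun _ => 0).
Proof.
  destruct (Hb1 (c1, c2, c3) I0) as [M0 B0].
  destruct (Hb1 (negb c1, c2, c3) I1) as [M1 B1].
  destruct (Hb1 (c1, negb c2, c3) I2) as [M2 B2].
  destruct (Hb1 (c1, c2, negb c3) I3) as [M3 B3].
  assert (HD2 := D2_lin4 _ _ _ _ _ _ _ _ _ _ _ _ (sgn (negb c1)) (sgn c1 * sgn (negb c2)) (sgn c1 * sgn c2 * sgn (negb c3))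
    (D2_of_C _ (C3_p2 _ (HC (c1, c2, c3)) I0) (fun i => C3_p3 _ (HC (c1, c2, c3)) I0 i i))
    (D2_of_C _ (C3_p2 _ (HC (negb c1, c2, c3)) I1) (fun i => C3_p3 _ (HC (negb c1, c2, c3)) I1 i i))
    (D2_of_C _ (C3_p2 _ (HC (c1, negb c2, c3)) I2) (fun i => C3_p3 _ (HC (c1, negb c2, c3)) I2 i i))
    (D2_of_C _ (C3_p2 _ (HC (c1, c2, negb c3)) I3) (fun i => C3_p3 _ (HC (c1, c2, negb c3)) I3 i i))).
  apply (liouville (hD f c1 c2 c3) _ _ (M0 + M1 + M2 + M3) ltac:(apply cont4_lin4; apply C3_c1; apply HC) HD2).
  - intros y. cbv beta.
    transitivity (Lap2 (fun i => partial i (partial i (partial I0 (fun y => f y (c1, c2, c3))))) y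
      + sgn (negb c1) * Lap2 (fun i => partial i (partial i (partial I1 (fun y => f y (negb c1, c2, c3))))) y
      + sgn c1 * sgn (negb c2) * Lap2 (fun i => partial i (partial i (partial I2 (fun y => f y (c1, negb c2, c3))))) y
      + sgn c1 * sgn c2 * sgn (negb c3) * Lap2 (fun i => partial i (partial i (partial I3 (fun y => f y (c1, c2, negb c3))))) y).
    { unfold Lap2; ring. }
    rewrite <- !lap_comm. exact (HDL y (c1, c2, c3)).
  - intros y. unfold hD.
    assert (A0 := abs_bd _ _ (B0 y)). assert (A1 := abs_bd _ _ (B1 y)).
    assert (A2 := abs_bd _ _ (B2 y)). assert (A3 := abs_bd _ _ (B3 y)).
    apply Rabs_le. destruct c1, c2, c3; simpl in *; lra.
Qed.

Lemma PP_sym k j C x : PP f k j C x = PP f j k C x.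
Proof. unfold PP. apply schwarz4. apply C3_C2. apply HC. Qed.

Lemma dh_zero c1 c2 c3 k x :
  PP f k I0 (c1, c2, c3) x + sgn (negb c1) * PP f k I1 (negb c1, c2, c3) x
  + sgn c1 * sgn (negb c2) * PP f k I2 (c1, negb c2, c3) x
  + sgn c1 * sgn c2 * sgn (negb c3) * PP f k I3 (c1, c2, negb c3) x = 0.
Proof.
  assert (E : partial k (hD f c1 c2 c3) x = 0).
  { unfold partial. rewrite (Derive_ext _ (fun _ => hD f c1 c2 c3 (fun _ => 0))).
    apply Derive_const. intros; apply hD_const. }
  rewrite <- E. unfold hD, PP.
  set (a0 := partial I0 (fun y => f y (c1, c2, c3))).
  set (a1 := partial I1 (fun y => f y (negb c1, c2, c3))).
  set (a2 := partial I2 (fun y => f y (c1, negb c2, c3))).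
  set (a3 := partial I3 (fun y => f y (c1, c2, negb c3))).
  set (k1 := sgn (negb c1)). set (k2 := sgn c1 * sgn (negb c2)). set (k3 := sgn c1 * sgn c2 * sgn (negb c3)).
  assert (P0 : partial_ex k a0) by (apply C3_p2; apply HC).
  assert (P1 : partial_ex k (fun y => k1 * a1 y)) by (apply pex_scal; apply C3_p2; apply HC).
  assert (P2 : partial_ex k (fun y => k2 * a2 y)) by (apply pex_scal; apply C3_p2; apply HC).
  assert (P3 : partial_ex k (fun y => k3 * a3 y)) by (apply pex_scal; apply C3_p2; apply HC).
  rewrite (partial_plus k (fun y => a0 y + k1 * a1 y + k2 * a2 y) (fun y => k3 * a3 y) x
    (pex_plus _ _ _ (pex_plus _ _ _ P0 P1) P2) P3).
  rewrite (partial_plus k (fun y => a0 y + k1 * a1 y) (fun y => k2 * a2 y) x (pex_plus _ _ _ P0 P1) P2).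
  rewrite (partial_plus k a0 (fun y => k1 * a1 y) x P0 P1).
  rewrite !partial_scal. reflexivity.
Qed.

Lemma f_harm B x : Lap2 (fun i => partial i (partial i (fun y => f y B))) x = 0.
Proof.
  destruct B as [[b1 b2] b3].
  assert (S := PP_sym).
  assert (E0 := dh_zero b1 b2 b3 I0 x).
  assert (E1 := dh_zero (negb b1) b2 b3 I1 x).
  assert (E2 := dh_zero b1 (negb b2) b3 I2 x).
  assert (E3 := dh_zero b1 b2 (negb b3) I3 x).
  change (PP f I0 I0 (b1, b2, b3) x + PP f I1 I1 (b1, b2, b3) x + PP f I2 I2 (b1, b2, b3) x + PP f I3 I3 (b1, b2, b3) x = 0).
  pose proof (S I1 I0 (true,true,true) x);
  pose proof (S I1 I0 (true,true,false) x);
  pose proof (S I1 I0 (true,false,true) x);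
  pose proof (S I1 I0 (true,false,false) x);
  pose proof (S I1 I0 (false,true,true) x);
  pose proof (S I1 I0 (false,true,false) x);
  pose proof (S I1 I0 (false,false,true) x);
  pose proof (S I1 I0 (false,false,false) x);
  pose proof (S I2 I0 (true,true,true) x);
  pose proof (S I2 I0 (true,true,false) x);
  pose proof (S I2 I0 (true,false,true) x);
  pose proof (S I2 I0 (true,false,false) x);
  pose proof (S I2 I0 (false,true,true) x);
  pose proof (S I2 I0 (false,true,false) x);
  pose proof (S I2 I0 (false,false,true) x);
  pose proof (S I2 I0 (false,false,false) x);
  pose proof (S I3 I0 (true,true,true) x);
  pose proof (S I3 I0 (true,true,false) x);
  pose proof (S I3 I0 (true,false,true) x);
  pose proof (S I3 I0 (true,false,false) x);
  pose proof (S I3 I0 (false,true,true) x);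
  pose proof (S I3 I0 (false,true,false) x);
  pose proof (S I3 I0 (false,false,true) x);
  pose proof (S I3 I0 (false,false,false) x);
  pose proof (S I2 I1 (true,true,true) x);
  pose proof (S I2 I1 (true,true,false) x);
  pose proof (S I2 I1 (true,false,true) x);
  pose proof (S I2 I1 (true,false,false) x);
  pose proof (S I2 I1 (false,true,true) x);
  pose proof (S I2 I1 (false,true,false) x);
  pose proof (S I2 I1 (false,false,true) x);
  pose proof (S I2 I1 (false,false,false) x);
  pose proof (S I3 I1 (true,true,true) x);
  pose proof (S I3 I1 (true,true,false) x);
  pose proof (S I3 I1 (true,false,true) x);
  pose proof (S I3 I1 (true,false,false) x);
  pose proof (S I3 I1 (false,true,true) x);
  pose proof (S I3 I1 (false,true,false) x);
  pose proof (S I3 I1 (false,false,true) x);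
  pose proof (S I3 I1 (false,false,false) x);
  pose proof (S I3 I2 (true,true,true) x);
  pose proof (S I3 I2 (true,true,false) x);
  pose proof (S I3 I2 (true,false,true) x);
  pose proof (S I3 I2 (true,false,false) x);
  pose proof (S I3 I2 (false,true,true) x);
  pose proof (S I3 I2 (false,true,false) x);
  pose proof (S I3 I2 (false,false,true) x);
  pose proof (S I3 I2 (false,false,false) x);
  clear HDL Hb0 Hb1 S.
  destruct b1, b2, b3; simpl sgn in *; simpl negb in *; lra.
Qed.

Lemma f_const B x : f x B = f (fun _ => 0) B.
Proof.
  destruct (Hb0 B) as [M HM].
  apply (liouville (fun y => f y B) _ _ M (C3_c0 _ (HC B))
    (D2_of_C _ (C3_p1 _ (HC B)) (fun i => C3_p2 _ (HC B) i i))).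
  - apply f_harm.
  - exact HM.
Qed.
End Main.

Theorem mainTheorem1 (f : pt -> cl) :
  holomorphic_cliffordian f ->
  (forall B, bounded4 (fun x => f x B)) ->
  (forall B i, bounded4 (partial i (fun x => f x B))) ->
  (forall B i j, bounded4 (partial i (partial j (fun x => f x B)))) ->
  exists c : cl, forall x B, f x B = c B.
Proof.
  intros [HC HDL] Hb0 Hb1 _.
  exists (fun B => f (fun _ => 0) B). intros x B.
  apply f_const; auto.
Qed.
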